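(* Let $\alpha=(a_1,a_2,\dots,a_w)$ and $\alpha^-=(a_2,\dots,a_w)$. Let $a_i$ with $i\ge2$ lie in $\mathbb{L}^t_\alpha$. Then: (1) if $un^{t-1}_\alpha(a_i)=a_1$, then $RL_{\alpha^-}(a_i)=RL_\alpha(a_i)-1$; (2) if $un^{t-1}_\alpha(a_i)\ne a_1$, then $RL_{\alpha^-}(a_i)=RL_\alpha(a_i)$.
   Context: Sequences consist of real numbers. Items are identified with their original positions, and items of $\alpha^-$ keep their indices from $\alpha$. Increasing subsequences are non-strict: indices strictly increase and values satisfy $\le$. For a sequence $\gamma$, $RL_\gamma(a)$ is the maximum length of an increasing subsequence of $\gamma$ ending at $a$. $\mathbb{L}^t_\gamma$ is the list of items of $\gamma$ with rising length $t$, ordered by position. The up neighbor $un_\alpha(a_i)$ is the item $a_j$ with the largest $j<i$ and $RL_\alpha(a_j)=RL_\alpha(a_i)-1$. Further, $un^0_\alpha(a)=a$ and $un^k_\alpha(a)=un_\alpha(un^{k-1}_\alpha(a))$. *)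

(* Defs.v *)
(* Sequences of reals are modelled as [seq R] for an
   arbitrary [R : realDomainType] (this includes the reals; only the order
   is used). Positions are 0-based: item a_(k+1) of the paper is index k. *)
From HB Require Import structures.
From mathcomp Require Import all_boot all_order all_algebra.
Set Implicit Arguments. Unset Strict Implicit. Unset Printing Implicit Defensive.
Import Order.TTheory GRing.Theory Num.Theory.
Local Open Scope ring_scope.

Section Defs.
Variable R : realDomainType.

Definition inc_subseq (s : seq R) (idx : seq nat) : bool :=
  [&& sorted ltn idx, all (fun k => (k < size s)%N) idx &
      sorted (fun j k => nth 0 s j <= nth 0 s k) idx].

Definition RL (s : seq R) (i : nat) : nat :=
  \max_(m : (i.+1).-tuple bool |
          inc_subseq s (mask m (iota 0 i.+1)) &&
          (last i.+1 (mask m (iota 0 i.+1)) == i))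
    size (mask m (iota 0 i.+1)).

Definition un (s : seq R) (i : nat) : option nat :=
  let c := [seq j <- iota 0 i | RL s j == (RL s i).-1] in
  if c is [::] then None else Some (last 0%N c).

Definition un_iter (s : seq R) (k i : nat) : option nat :=
  iter k (fun o => obind (un s) o) (Some i).

End Defs.

(* Main.v *)
Require Import Defs.
From HB Require Import structures.
From mathcomp Require Import all_boot all_order all_algebra.
Set Implicit Arguments. Unset Strict Implicit. Unset Printing Implicit Defensive.
Import Order.TTheory GRing.Theory Num.Theory.

Definition chain (R : realDomainType) (s : seq R) i b :=
  inc_subseq s b && (last i.+1 b == i).

Lemma last_max x0 l : path leq x0 l -> forall y, y \in x0 :: l -> y <= last x0 l.
Proof.
elim: l x0 => [|a l IH] x0 /=; first by move=> _ y; rewrite inE => /eqP->.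
case/andP=> h1 h2 y; rewrite inE => /orP[/eqP->|yin].
  by apply: leq_trans h1 _; apply: IH => //; rewrite inE eqxx.
by apply: IH.
Qed.

Lemma chain_nil (R : realDomainType) (s : seq R) i : chain s i [::] = false.
Proof. by rewrite /chain /= (gtn_eqF (ltnSn i)). Qed.

Lemma chain_le (R : realDomainType) (s : seq R) i b :
  chain s i b -> forall y, y \in b -> y <= i.
Proof.
case: b => [|x b]; first by rewrite chain_nil.
case/andP=> /and3P[h1 _ _] /eqP /= <- y yin.
apply: last_max => //.
apply: sub_path h1 => u v; exact: ltnW.
Qed.

Lemma RL_ge (R : realDomainType) (s : seq R) i b :
  chain s i b -> (size b <= RL s i)%N.
Proof.
move=> hc; have hle := chain_le hc.
move: (hc) => /andP[/and3P[h1 h2 h3] h4].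
set l := iota 0 i.+1.
have hsub : subseq b l.
  have -> : b = filter (mem b) l.
    apply: (@sorted_eq _ ltn) => //.
    - exact: ltn_trans.
    - by move=> x y /andP[a c]; move: (ltn_trans a c); rewrite ltnn.
    - by rewrite sorted_filter //; [exact: ltn_trans | exact: iota_ltn_sorted].
    apply: uniq_perm.
    - exact: (sorted_uniq ltn_trans ltnn).
    - by rewrite filter_uniq // iota_uniq.
    move=> x; rewrite mem_filter /= mem_iota add0n; case xb: (x \in b) => //=.
    by rewrite ltnS hle.
  exact: filter_subseq.
case/subseqP: hsub => m hm hb.
have hm' : size m == i.+1 by rewrite hm size_iota.
rewrite /RL; rewrite hb.
apply: (@leq_bigmax_cond _ _ (fun t : (i.+1).-tuple bool => size (mask t l)) (Tuple hm')).
by rewrite /= -hb.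
Qed.

Lemma RL_ex (R : realDomainType) (s : seq R) i :
  (i < size s)%N -> exists b, chain s i b /\ size b = RL s i.
Proof.
move=> hi; rewrite /RL.
have hm : size (nseq i false ++ [:: true]) == i.+1 by rewrite size_cat size_nseq addn1.
have P0 : (fun m : (i.+1).-tuple bool => inc_subseq s (mask m (iota 0 i.+1)) && (last i.+1 (mask m (iota 0 i.+1)) == i)) (Tuple hm).
  have -> : iota 0 i.+1 = iota 0 i ++ [:: i] by rewrite -addn1 iotaD.
  rewrite /= mask_cat ?size_nseq ?size_iota // mask_false /=.
  by rewrite /inc_subseq /= hi eqxx.
rewrite (bigop.bigmax_eq_arg (Tuple hm) P0).
case: arg_maxnP => //= m Pm _.
by exists (mask m (iota 0 i.+1)); split => //; move: Pm => /andP[].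
Qed.
Lemma sorted_rcons2 (T : Type) (e : rel T) p k j :
  sorted e (rcons (rcons p k) j) = sorted e (rcons p k) && e k j.
Proof.
case: p => [|a p] /=; first by rewrite andbT.
by rewrite rcons_path last_rcons.
Qed.

Lemma chain_single (R : realDomainType) (s : seq R) j :
  (j < size s)%N -> chain s j [:: j].
Proof. by move=> h; rewrite /chain /inc_subseq /= h eqxx. Qed.

Lemma chain_size (R : realDomainType) (s : seq R) j b :
  chain s j b -> (j < size s)%N.
Proof.
case/lastP: b => [|b x]; first by rewrite chain_nil.
case/andP=> /and3P[_ h2 _]; rewrite last_rcons => /eqP <-.
by move: h2; rewrite all_rcons => /andP[].
Qed.

Lemma RL_pos (R : realDomainType) (s : seq R) j :
  (j < size s)%N -> (1 <= RL s j)%N.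
Proof. by move=> h; exact: (RL_ge (chain_single h)). Qed.

Lemma chain_rcons (R : realDomainType) (s : seq R) k j b :
  chain s k b -> (k < j)%N -> (j < size s)%N -> (s`_k <= s`_j)%R ->
  chain s j (rcons b j).
Proof.
case/lastP: b => [|b x]; first by rewrite chain_nil.
case/andP=> /and3P[h1 h2 h3]; rewrite last_rcons => /eqP ? hkj hj hv; subst x.
rewrite /chain /inc_subseq last_rcons eqxx andbT.
rewrite !sorted_rcons2 h1 h3 hv all_rcons hj h2 /= andbT; exact: hkj.
Qed.

Lemma chain_rconsK (R : realDomainType) (s : seq R) j b k :
  chain s j (rcons (rcons b k) j) ->
  [/\ chain s k (rcons b k), (k < j)%N & (s`_k <= s`_j)%R].
Proof.
case/andP=> /and3P[h1 h2 h3] _.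
move: h1 h3; rewrite !sorted_rcons2 => /andP[h1 hkj] /andP[h3 hv].
move: h2; rewrite all_rcons => /andP[_ h2].
split => //; first by rewrite /chain /inc_subseq h1 h2 h3 last_rcons eqxx.
Qed.

Lemma RL_P2 (R : realDomainType) (s : seq R) k j :
  (k < j)%N -> (j < size s)%N -> (s`_k <= s`_j)%R -> (RL s k < RL s j)%N.
Proof.
move=> hkj hj hv.
have [b [hb sb]] := RL_ex (ltn_trans hkj hj).
have := RL_ge (chain_rcons hb hkj hj hv).
by rewrite size_rcons sb.
Qed.

Lemma RL_P3 (R : realDomainType) (s : seq R) j :
  (j < size s)%N -> (2 <= RL s j)%N ->
  exists k, [/\ (k < j)%N, (s`_k <= s`_j)%R & RL s k = (RL s j).-1].
Proof.
move=> hj h2.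
have [b [hb sb]] := RL_ex hj.
move: hb sb; case/lastP: b => [|b x]; first by rewrite chain_nil.
move=> hb; have := hb; case/andP=> _; rewrite last_rcons => /eqP ex; subst x.
move: hb; case/lastP: b => [|b k].
  by move=> _ /= sb; rewrite -sb in h2.
move=> /chain_rconsK [hc hkj hv]; rewrite size_rcons => sb.
exists k; split => //.
have h1 := RL_ge hc; have h3 := RL_P2 hkj hj hv.
rewrite -sb /=; apply/eqP; rewrite eqn_leq h1 andbT -ltnS sb; exact: h3.
Qed.
Lemma chain_shift (R : realDomainType) (s : seq R) i b :
  chain (behead s) i b = chain s i.+1 (map S b).
Proof.
rewrite /chain /inc_subseq sorted_map all_map sorted_map.
rewrite (last_map S b i.+1).
case: s => [|x s] /=; last by [].
case: b => [|y b] //=.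
Qed.

Lemma chain_unshift (R : realDomainType) (s : seq R) i b :
  chain s i b -> all (fun x => 0 < x)%N b -> (0 < i)%N ->
  chain (behead s) i.-1 (map predn b).
Proof.
move=> hc ha hi; rewrite chain_shift prednK // -map_comp.
have -> : map (S \o predn) b = b.
  rewrite -[RHS]map_id; apply/eq_in_map => x xb /=.
  by rewrite prednK //; move/allP: ha; apply.
exact: hc.
Qed.

Lemma un_some (R : realDomainType) (s : seq R) j c : un s j = Some c ->
  [/\ (c < j)%N, RL s c = (RL s j).-1 &
      forall k, (k < j)%N -> RL s k = (RL s j).-1 -> (k <= c)%N].
Proof.
rewrite /un; case E : [seq j0 <- iota 0 j | RL s j0 == (RL s j).-1] => [|x l] //= [<-].
have hs : sorted ltn (x :: l).
  by rewrite -E sorted_filter //; [exact: ltn_trans | exact: iota_ltn_sorted].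
have := mem_last x l; rewrite -E mem_filter mem_iota add0n => /andP[/eqP h1 /andP[_ h2]].
split => // k hk hRL.
apply: last_max; first by apply: sub_path hs => u v; exact: ltnW.
by rewrite -E mem_filter mem_iota add0n hRL eqxx hk.
Qed.

Lemma un_exists (R : realDomainType) (s : seq R) j k : (k < j)%N ->
  RL s k = (RL s j).-1 -> exists c, un s j = Some c.
Proof.
move=> hk hRL; rewrite /un.
case E : [seq j0 <- iota 0 j | RL s j0 == (RL s j).-1] => [|x l] //=; last by eexists.
have : k \in [::] by rewrite -E mem_filter mem_iota add0n hRL eqxx hk.
by [].
Qed.

Lemma un_iterS (R : realDomainType) (s : seq R) n c c' :
  un s c = Some c' -> un_iter s n.+1 c = un_iter s n c'.
Proof. by move=> h; rewrite /un_iter iterSr /= h. Qed.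

Lemma chain_mem (R : realDomainType) (s : seq R) j b : chain s j b -> j \in b.
Proof.
case/lastP: b => [|b x]; first by rewrite chain_nil.
by case/andP=> _; rewrite last_rcons => /eqP ->; rewrite mem_rcons mem_head.
Qed.

Lemma lemD (R : realDomainType) (s : seq R) n : forall c j b,
  chain s j b -> size b = n.+1 -> RL s j = n.+1 -> (j <= c)%N ->
  RL s c = n.+1 -> all (fun x => 0 < x)%N b -> un_iter s n c <> Some 0%N.
Proof.
elim: n => [|n IH] c j b hc hs hj hjc hRc ha.
  rewrite /un_iter /= => -[hc0]; subst c.
  have := allP ha j (chain_mem hc); move: hjc; rewrite leqn0 => /eqP ->.
  by [].
move: hc hs ha; case/lastP: b => [|b x]; first by rewrite chain_nil.
move=> hc; have := hc; case/andP=> _; rewrite last_rcons => /eqP ex; subst x.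
move: hc; case/lastP: b => [|b k]; first by [].
move=> hc; have [hc' hkj hv] := chain_rconsK hc.
rewrite !size_rcons => -[hs] ha.
have hjs := chain_size hc.
have hRk : RL s k = n.+1.
  apply/eqP; rewrite eqn_leq -ltnS -hj (RL_P2 hkj hjs hv) /=.
  by have := RL_ge hc'; rewrite size_rcons hs.
have hkc : (k < c)%N by apply: leq_trans hkj hjc.
have hk' : RL s k = (RL s c).-1 by rewrite hRk hRc.
have [c' hc1] := un_exists hkc hk'.
have [hc'c hRc' hmax] := un_some hc1.
rewrite (un_iterS _ hc1).
apply: (IH c' k (rcons b k)) => //.
- by rewrite size_rcons hs.
- by apply: hmax.
- by rewrite hRc' hRc.
- by move: ha; rewrite all_rcons => /andP[_].
Qed.
Lemma lemE (R : realDomainType) (s : seq R) n : forall j,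
  (j < size s)%N -> RL s j = n.+1 ->
  exists c rest, [/\ un_iter s n j = Some c, chain s j (c :: rest) & size rest = n].
Proof.
elim: n => [|n IH] j hj hRj.
  by exists j, [::]; split => //; exact: chain_single.
have h2j : (2 <= RL s j)%N by rewrite hRj.
have [k [hkj hv hRk]] := RL_P3 hj h2j.
have [c' hc1] := un_exists hkj hRk.
have [hc'j hRc' hmax] := un_some hc1.
have hkc' := hmax k hkj hRk.
have hv' : (s`_c' <= s`_j)%R.
  move: hkc'; rewrite leq_eqVlt => /orP[/eqP <- //|hkc].
  have : ~~ (s`_k <= s`_c')%R.
    apply/negP => h; have := RL_P2 hkc (ltn_trans hc'j hj) h.
    by rewrite hRk hRc' ltnn.
  rewrite -ltNge => hlt; exact: le_trans (ltW hlt) hv.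
have hRc'' : RL s c' = n.+1 by rewrite hRc' hRj.
have [c [rest [h1 h2 h3]]] := IH c' (ltn_trans hc'j hj) hRc''.
exists c, (rcons rest j); split.
- by rewrite (un_iterS _ hc1).
- by rewrite -rcons_cons; apply: (chain_rcons h2).
- by rewrite size_rcons h3.
Qed.

Theorem theorem3 (R : realDomainType) (alpha : seq R) (i t : nat)
  (hi : (1 <= i < size alpha)%N) (hL : RL alpha i = t) :
  (un_iter alpha t.-1 i = Some 0%N ->
     RL (behead alpha) i.-1 = (RL alpha i).-1) /\
  (un_iter alpha t.-1 i <> Some 0%N ->
     RL (behead alpha) i.-1 = RL alpha i).
Proof.
case/andP: hi => hi0 his.
have hbs : (i.-1 < size (behead alpha))%N by rewrite size_behead ltn_predRL prednK.
have [b0 [hb0 sb0]] := RL_ex hbs.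
have hb0' : chain alpha i (map S b0) by rewrite -[i](prednK hi0) -chain_shift.
have hU : (RL (behead alpha) i.-1 <= t)%N by rewrite -sb0 -hL -(size_map S); exact: RL_ge.
have ht : (1 <= t)%N by rewrite -hL; exact: RL_pos.
rewrite hL; split => hun.
- apply/eqP; rewrite eqn_leq; apply/andP; split.
    rewrite -ltnS prednK // ltn_neqAle hU andbT; apply/eqP => heq.
    apply: (lemD (n := t.-1) (c := i) hb0') => //.
    + by rewrite size_map sb0 heq prednK.
    + by rewrite hL prednK.
    + by rewrite hL prednK.
    + by apply/allP => x /mapP [y _ ->].
  have [b [hb sb]] := RL_ex his.
  move: hb sb; case: b => [|x [|y rest]]; first by rewrite chain_nil.
    by move=> _ /= sb; rewrite hL in sb; rewrite -sb.
  move=> hb sb.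
  have hc : chain alpha i (y :: rest).
    move: hb; rewrite /chain /inc_subseq /= => /andP[/and3P[/andP[_ h1] /andP[_ h2] /andP[_ h3]] h4].
    by rewrite h1 h2 h3 h4.
  have ha : all (fun x => 0 < x)%N (y :: rest).
    move: hb => /andP[/and3P[h1 _ _] _].
    have := order_path_min ltn_trans h1; apply: sub_all => z /= hz.
    exact: leq_ltn_trans (leq0n x) hz.
  have := RL_ge (chain_unshift hc ha hi0).
  by rewrite size_map -hL -sb.
- have hRi : RL alpha i = t.-1.+1 by rewrite hL prednK.
  have [c [rest [h1 h2 h3]]] := lemE his hRi.
  apply/eqP; rewrite eqn_leq hU /=.
  have hc0 : (0 < c)%N by rewrite lt0n; apply/eqP => hc0; apply: hun; rewrite h1 hc0.
  have ha : all (fun x => 0 < x)%N (c :: rest).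
    move: h2 => /andP[/and3P[hs _ _] _].
    rewrite /= hc0 /=.
    have := order_path_min ltn_trans hs; apply: sub_all => z /= hz.
    exact: ltn_trans hc0 hz.
  have := RL_ge (chain_unshift h2 ha hi0).
  by rewrite size_map /= h3 prednK.
Qed.
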